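(* Assume Assumption (S) of the context holds. Then $\|M^*\|:=\sup_{\omega\in\mathbb V^k,\ \omega\not\equiv0}\frac{\|M^*\omega\|}{\|\omega\|}\le C$, where $C$ is a positive constant independent of the mesh $\{I_i\}$.
   Context: Let $\Omega=[a,b]$ be partitioned into finitely many cells $I_i=[x_{i-\frac12},x_{i+\frac12}]$ with sizes $h_i$, $h=\max_i h_i$, quasi-uniform ($h\le Ch_i$ for all $i$ with a fixed constant $C$). $\|\cdot\|$ is the $L^2(\Omega)$ norm, $(\cdot,\cdot)_{I_i}$ the $L^2(I_i)$ inner product. $\mathbb V^k=\{v\in L^2(\Omega): v|_{I_i}\in\mathbb P^k(I_i)\ \forall i\}$. Each $I_i$ has subdivision points $x_{i-\frac12}=x_{i,0}<x_{i,1}<\dots<x_{i,k}<x_{i,k+1}=x_{i+\frac12}$, control volumes $I_{i,j}=[x_{i,j},x_{i,j+1}]$, $j=0,\dots,k$, and $\mathbb V^{k,*}$ is the space of functions constant on each $I_{i,j}$. On each $I_i$ a quadrature $Q_i^k(v)=\sum_{j=0}^{k+1}A_{i,j}v(x_{i,j})$ is given with error $R_i^k(v)=\int_{I_i}v\,dx-Q_i^k(v)$, exact on $\mathbb P^{k-1}(I_i)$. $M^*:\mathbb V^k\to\mathbb V^{k,*}$ is defined cellwise: for $v=\omega|_{I_i}$, $(M^*\omega)|_{I_{i,0}}=v(x_{i-\frac12})+A_{i,0}v'(x_{i-\frac12})$ and $(M^*\omega)|_{I_{i,j}}-(M^*\omega)|_{I_{i,j-1}}=A_{i,j}v'(x_{i,j})$,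 $j=1,\dots,k$ (one-sided values from inside $I_i$). $L_{i,\ell}$ is the shifted Legendre polynomial of degree $\ell$ on $I_i$ with $L_{i,\ell}(x_{i+\frac12})=1$, $(L_{i,\ell},L_{i,m})_{I_i}=\delta_{\ell m}h_i/(2\ell+1)$. Assumption (S): $k\ge1$ and for every $i$, (1) $R_i^k(v)=0$ for all $v\in\mathbb P^{2k-1}(I_i)$, and (2) $\frac{h_i}{2k-1}-Q_i^k(L_{i,k+1}L_{i,k-1})>0$. *)

(* Defs.v *)
From HB Require Import structures.
From mathcomp Require Import all_boot all_order all_algebra.
From mathcomp Require Import all_classical all_reals all_analysis.
Set Implicit Arguments.
Unset Strict Implicit.
Unset Printing Implicit Defensive.
Import Order.TTheory GRing.Theory Num.Theory.
Local Open Scope ring_scope.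

Section Defs.
Variable R : realType.

Definition integ (c d : R) (f : R -> R) : R :=
  \int[lebesgue_measure]_(x in `[c, d]) f x.

Definition L2sq (c d : R) (f : R -> R) : R := integ c d (fun x => f x ^+ 2).

(* shifted Legendre polynomial of degree l on [c,d] (Rodrigues formula):
   L_l(x) = 1/(l! (d-c)^l) * D^l [ (x-c)^l (x-d)^l ];
   it satisfies L_l(d) = 1 and (L_l, L_m)_{[c,d]} = delta_{lm} (d-c)/(2l+1). *)
Definition legendre (c d : R) (l : nat) : {poly R} :=
  ((l`!)%:R * (d - c) ^+ l)^-1 *:
    ((('X - c%:P) ^+ l * ('X - d%:P) ^+ l)^`(l)).

(* mesh nodes xs 0 < xs 1 < ... < xs N ; cell i = [xs i, xs i.+1] *)
Definition hcell (xs : nat -> R) (i : nat) : R := xs i.+1 - xs i.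

(* subdivision points / weights on cell i: affine images of the
   reference nodes xi (on [0,1]) and reference weights w *)
Definition subpt (xs xi : nat -> R) (i j : nat) : R := xs i + hcell xs i * xi j.
Definition wt (xs w : nat -> R) (i j : nat) : R := hcell xs i * w j.

Definition quad (k : nat) (x A : nat -> R) (v : {poly R}) : R :=
  \sum_(j < k.+2) A j * v.[x j].

Definition assumptionS (k : nat) (c d : R) (x A : nat -> R) : Prop :=
  (forall v : {poly R}, (size v <= k.*2)%N ->
     integ c d (fun t => v.[t]) - quad k x A v = 0) /\
  0 < (d - c) / ((k.*2).-1)%:R
        - quad k x A (legendre c d k.+1 * legendre c d k.-1).

(* value of M^* omega on the control volume I_{i,j}, where v = omega|_{I_i}:
   c_0 = v(x_0) + A_0 v'(x_0),  c_j = c_{j-1} + A_j v'(x_j). *)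
Fixpoint mstar_val (v : {poly R}) (x A : nat -> R) (j : nat) : R :=
  match j with
  | 0 => v.[x 0%N] + A 0%N * (v^`()).[x 0%N]
  | j'.+1 => mstar_val v x A j' + A j * (v^`()).[x j]
  end.

(* ||omega||^2 for omega|_{I_i} = p i *)
Definition normsq_omega (N : nat) (xs : nat -> R) (p : nat -> {poly R}) : R :=
  \sum_(i < N) L2sq (xs i) (xs i.+1) (fun t => (p i).[t]).

Definition normsq_Mstar (k N : nat) (xs xi w : nat -> R) (p : nat -> {poly R}) : R :=
  \sum_(i < N) \sum_(j < k.+1)
    L2sq (subpt xs xi i j) (subpt xs xi i j.+1)
         (fun _ => mstar_val (p i) (subpt xs xi i) (wt xs w i) j).

End Defs.

(* Main.v *)
Require Import Defs.
From HB Require Import structures.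
From mathcomp Require Import all_boot all_order all_algebra.
From mathcomp Require Import all_classical all_reals all_analysis.
From mathcomp Require Import ring lra zify.
Import Order.TTheory GRing.Theory Num.Theory.
Import numFieldNormedType.Exports.
Local Open Scope ring_scope.

Section Aux.
Variable R : realType.
Implicit Types p q u v : {poly R}.

Definition prim p : {poly R} := \poly_(i < (size p).+1) (p`_i.-1 / i%:R).

Lemma coef_prim p i : (prim p)`_i = p`_i.-1 / i%:R.
Proof.
rewrite coef_poly; case: ltnP => // H.
case: i H => [|i] H; first by rewrite invr0 mulr0.
by rewrite /= nth_default ?mul0r // -ltnS.
Qed.

Lemma deriv_prim p : (prim p)^`() = p.
Proof.
apply/polyP => i; rewrite coef_deriv coef_prim /= -[LHS]mulr_natr divfK //.
Qed.

Lemma primD p q : prim (p + q) = prim p + prim q.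
Proof. by apply/polyP => i; rewrite coefD !coef_prim coefD mulrDl. Qed.

Lemma primZ (a : R) p : prim (a *: p) = a *: prim p.
Proof. by apply/polyP => i; rewrite coefZ !coef_prim coefZ mulrA. Qed.

Lemma prim0 : prim 0 = 0.
Proof. by apply/polyP => i; rewrite coef_prim !coef0 mul0r. Qed.

Lemma prim_at0 p : (prim p).[0] = 0.
Proof. by rewrite horner_coef0 coef_prim invr0 mulr0. Qed.

Lemma integ_polyP (c d : R) q P : c < d -> P^`() = q ->
  integ c d (fun t => q.[t]) = P.[d] - P.[c].
Proof.
move=> cd HP; rewrite /integ /Rintegral.
rewrite (@continuous_FTC2 _ _ (horner P)) //.
- apply/continuous_subspaceT => x; exact: continuous_horner.
- split=> [x _| |].
  + exact: derivable_horner.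
  + by apply: cvg_at_right_filter; exact: continuous_horner.
  + by apply: cvg_at_left_filter; exact: continuous_horner.
- by move=> x _; rewrite -derivE HP.
Qed.

Lemma integ_poly (c d : R) q : c < d ->
  integ c d (fun t => q.[t]) = (prim q).[d] - (prim q).[c].
Proof. by move=> cd; apply: integ_polyP => //; exact: deriv_prim. Qed.

Definition Bf u v : R := (prim (u * v)).[1].

Lemma BfC u v : Bf u v = Bf v u.
Proof. by rewrite /Bf mulrC. Qed.

Lemma BfDl p q r : Bf (p + q) r = Bf p r + Bf q r.
Proof. by rewrite /Bf mulrDl primD hornerD. Qed.

Lemma BfZl (c : R) p r : Bf (c *: p) r = c * Bf p r.
Proof. by rewrite /Bf -scalerAl primZ hornerZ. Qed.

Lemma BfDr p q r : Bf r (p + q) = Bf r p + Bf r q.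
Proof. by rewrite !(BfC r) BfDl. Qed.

Lemma BfZr (c : R) p r : Bf r (c *: p) = c * Bf r p.
Proof. by rewrite !(BfC r) BfZl. Qed.

Lemma Bf_integ u : Bf u u = integ 0 1 (fun t => (u * u).[t]).
Proof. by rewrite integ_poly ?ltr01 // prim_at0 subr0. Qed.

Lemma Bf_ge0 u : 0 <= Bf u u.
Proof.
rewrite Bf_integ; apply: Rintegral_ge0 => x _.
by rewrite hornerM -expr2 sqr_ge0.
Qed.

Lemma Bf_eq0 u : Bf u u = 0 -> u = 0.
Proof.
move=> B0; set P := prim (u * u).
have HP : forall s, 0 < s < 1 -> P.[s] = 0.
  move=> s /andP[s0 s1].
  have h1 : 0 <= P.[s] - P.[0].
    rewrite -integ_poly //; apply: Rintegral_ge0 => x _.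
    by rewrite hornerM -expr2 sqr_ge0.
  have h2 : 0 <= P.[1] - P.[s].
    rewrite -integ_poly //; apply: Rintegral_ge0 => x _.
    by rewrite hornerM -expr2 sqr_ge0.
  move: h1 h2; rewrite /P prim_at0 -/P.
  have -> : P.[1] = 0 by exact: B0.
  by rewrite subr0 sub0r oppr_ge0 => h1 h2; apply/eqP; rewrite eq_le h1 h2.
have P0 : P = 0.
  apply/eqP; apply: contraT => Pn0.
  pose rs := [seq (m.+2%:R : R)^-1 | m <- iota 0 (size P)].
  have := @max_poly_roots _ P rs Pn0.
  rewrite size_map size_iota ltnn; apply.
  - apply/allP => x /mapP[m _ ->]; apply/rootP; apply: HP.
    rewrite invr_gt0 ltr0n /= invf_lt1 ?ltr0n // ltr1n //.
  - rewrite map_inj_in_uniq ?iota_uniq // => m1 m2 _ _ /invr_inj /eqP.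
    by rewrite eqr_nat => /eqP [].
have : (u * u) = 0 by rewrite -(deriv_prim (u * u)) -/P P0 deriv0.
by move/eqP; rewrite mulf_eq0 orbb => /eqP.
Qed.

Lemma Bf_CS x y : Bf x y ^+ 2 <= Bf x x * Bf y y.
Proof.
have [y0|yn0] := eqVneq y 0.
  by rewrite y0 /Bf !mulr0 prim0 horner0 expr0n /= mulr0.
have b0 : 0 < Bf y y.
  rewrite lt_def Bf_ge0 andbT; apply/eqP => /Bf_eq0 y0; by rewrite y0 eqxx in yn0.
have := Bf_ge0 (Bf y y *: x + (- Bf x y) *: y).
rewrite !BfDl !BfDr !BfZl !BfZr (BfC y x) => H.
have : 0 <= Bf y y * (Bf x x * Bf y y - Bf x y ^+ 2) by nra.
by rewrite pmulr_rge0 // subr_ge0.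
Qed.

Lemma lin_expand (phi : {poly R} -> R) n u :
  (forall p q, phi (p + q) = phi p + phi q) ->
  (forall (c : R) p, phi (c *: p) = c * phi p) -> (size u <= n)%N ->
  phi u = \sum_(a < n) u`_a * phi 'X^a.
Proof.
move=> phiD phiZ Hs.
have phi0 : phi 0 = 0 by rewrite -(scale0r (0 : {poly R})) phiZ mul0r.
have Hu : u = \sum_(a < n) u`_a *: 'X^a.
  rewrite -poly_def; apply/polyP => i; rewrite coef_poly; case: ltnP => // Hi.
  by rewrite nth_default // (leq_trans Hs Hi).
rewrite {1}Hu (big_morph phi phiD phi0); apply: eq_bigr => a _; exact: phiZ.
Qed.

Section Mx.
Variable m : nat.
Local Notation n := m.+1.

Definition cv u : 'rV[R]_n := \row_a u`_a.
Definition Hm : 'M[R]_n := \matrix_(a, b) Bf 'X^a 'X^b.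

Lemma Bf_sum u v : (size u <= n)%N -> (size v <= n)%N ->
  Bf u v = \sum_(a < n) \sum_(b < n) u`_a * v`_b * Bf 'X^a 'X^b.
Proof.
move=> su sv.
rewrite (@lin_expand (fun p => Bf p v) n u) //; last first.
- by move=> c p; exact: BfZl.
- by move=> p q; exact: BfDl.
apply: eq_bigr => a _; rewrite BfC.
rewrite (@lin_expand (fun p => Bf p 'X^a) n v) //; last first.
- by move=> c p; exact: BfZl.
- by move=> p q; exact: BfDl.
rewrite mulr_sumr; apply: eq_bigr => b _.
by rewrite mulrA (BfC 'X^b).
Qed.

Lemma mx_form (c d : 'rV[R]_n) :
  (c *m Hm *m d^T) 0 0 = \sum_(a < n) \sum_(b < n) c 0 a * d 0 b * Hm a b.
Proof.
rewrite mxE; under eq_bigr do rewrite !mxE big_distrl /=.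
rewrite exchange_big; apply: eq_bigr => a _; apply: eq_bigr => b _.
by rewrite !mxE mulrAC.
Qed.

Lemma Bf_mx u v : (size u <= n)%N -> (size v <= n)%N ->
  Bf u v = (cv u *m Hm *m (cv v)^T) 0 0.
Proof.
move=> su sv; rewrite Bf_sum // mx_form.
by apply: eq_bigr => a _; apply: eq_bigr => b _; rewrite !mxE.
Qed.

Lemma Hm_unit : Hm \in unitmx.
Proof.
rewrite -row_free_unit; apply: inj_row_free => c Hc.
pose u : {poly R} := \poly_(i < n) c 0 (inord i).
have cu : cv u = c by apply/rowP => i; rewrite !mxE coef_poly ltn_ord inord_val.
have su : (size u <= n)%N by exact: size_poly.
have : Bf u u = 0 by rewrite Bf_mx // cu Hc mul0mx mxE.
move/Bf_eq0 => u0; apply/rowP => i; by rewrite -cu u0 !mxE coef0.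
Qed.

Definition Kp (a : 'I_n) : {poly R} := \poly_(i < n) ((delta_mx (0 : 'I_1) a *m invmx Hm) 0 (inord i)).

Lemma Kp_rep a u : (size u <= n)%N -> Bf (Kp a) u = u`_a.
Proof.
move=> su; rewrite Bf_mx ?size_poly //.
have -> : cv (Kp a) = delta_mx 0 a *m invmx Hm.
  by apply/rowP => i; rewrite [LHS]mxE coef_poly ltn_ord inord_val.
rewrite -(mulmxA (delta_mx 0 a)) mulVmx ?Hm_unit // mulmx1 -rowE !mxE.
done.
Qed.

Definition Kc : R := \sum_(a < n) Num.sqrt (Bf (Kp a) (Kp a)).

Lemma Kc_ge0 : 0 <= Kc.
Proof. by apply: sumr_ge0 => a _; exact: sqrtr_ge0. Qed.

Lemma coef_bound u (a : 'I_n) : (size u <= n)%N ->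
  `|u`_a| <= Kc * Num.sqrt (Bf u u).
Proof.
move=> su; rewrite -Kp_rep // -sqrtr_sqr.
apply: le_trans (_ : Num.sqrt (Bf (Kp a) (Kp a) * Bf u u) <= _).
  by rewrite ler_sqrt ?mulr_ge0 ?Bf_ge0 // Bf_CS.
rewrite sqrtrM ?Bf_ge0 // ler_wpM2r ?sqrtr_ge0 //.
rewrite /Kc (bigD1 a) //= lerDl; apply: sumr_ge0 => b _; exact: sqrtr_ge0.
Qed.

Lemma phi_bound (phi : {poly R} -> R) u :
  (forall p q, phi (p + q) = phi p + phi q) ->
  (forall (c : R) p, phi (c *: p) = c * phi p) -> (size u <= n)%N ->
  `|phi u| <= (Kc * \sum_(a < n) `|phi 'X^a|) * Num.sqrt (Bf u u).
Proof.
move=> phiD phiZ su; rewrite (@lin_expand phi n u) //.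
apply: le_trans (ler_norm_sum _ _ _) _.
rewrite mulrAC mulr_sumr; apply: ler_sum => a _.
by rewrite normrM ler_wpM2r // coef_bound.
Qed.

End Mx.
Lemma mstar_valD p q x A j :
  mstar_val (p + q) x A j = mstar_val p x A j + mstar_val q x A j.
Proof.
elim: j => [|j IH] /=; rewrite ?IH derivD !hornerD; ring.
Qed.

Lemma mstar_valZ (c : R) p x A j :
  mstar_val (c *: p) x A j = c * mstar_val p x A j.
Proof.
elim: j => [|j IH] /=; rewrite ?IH derivZ !hornerZ; ring.
Qed.

Lemma mstar_scale v (c h : R) xi w j :
  mstar_val v (fun j => c + h * xi j) (fun j => h * w j) j =
  mstar_val (v \Po (c%:P + h *: 'X)) xi w j.
Proof.
have Hq : forall t, (c%:P + h *: 'X).[t] = c + h * t.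
  by move=> t; rewrite hornerD hornerC hornerZ hornerX.
have Hd : forall t, ((v \Po (c%:P + h *: 'X))^`()).[t] = (v^`()).[c + h * t] * h.
  move=> t; rewrite deriv_comp hornerM horner_comp Hq derivD derivC derivZ derivX.
  by rewrite add0r hornerZ hornerC mulr1.
elim: j => [|j IH] /=; rewrite ?IH Hd ?horner_comp ?Hq; ring.
Qed.

Lemma integ_const (al be m : R) : al < be ->
  L2sq al be (fun _ => m) = m ^+ 2 * (be - al).
Proof.
move=> ab; rewrite /L2sq.
have -> : (fun _ : R => m ^+ 2) = (fun t => ((m ^+ 2)%:P).[t]).
  by apply/funext => t; rewrite hornerC.
rewrite (@integ_polyP _ _ _ ((m ^+ 2) *: 'X)) //.
  by rewrite !hornerZ !hornerX mulrBr.
by rewrite derivZ derivX -alg_polyC.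
Qed.

Lemma integ_cell (c d : R) v : c < d ->
  L2sq c d (fun t => v.[t]) =
  (d - c) * Bf (v \Po (c%:P + (d - c) *: 'X)) (v \Po (c%:P + (d - c) *: 'X)).
Proof.
move=> cd; set h := d - c; set q := c%:P + h *: 'X; set u := v \Po q.
have Hq : forall t, q.[t] = c + h * t.
  by move=> t; rewrite hornerD hornerC hornerZ hornerX.
have dq : q^`() = h%:P by rewrite derivD derivC derivZ derivX add0r alg_polyC.
rewrite /L2sq.
have -> : (fun t => v.[t] ^+ 2) = (fun t => (v * v).[t]).
  by apply/funext => t; rewrite hornerM expr2.
rewrite integ_poly //.
set G := prim (v * v) \Po q.
have HG : integ 0 1 (fun t => (h *: (u * u)).[t]) = G.[1] - G.[0].
  apply: integ_polyP; first exact: ltr01.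
  by rewrite /G deriv_comp deriv_prim dq comp_polyM mulrC mul_polyC.
have HG2 : integ 0 1 (fun t => (h *: (u * u)).[t]) =
    (h *: prim (u * u)).[1] - (h *: prim (u * u)).[0].
  apply: integ_polyP; first exact: ltr01.
  by rewrite derivZ deriv_prim.
move: HG2; rewrite HG /G !horner_comp !Hq mulr0 mulr1 addr0 !hornerZ prim_at0 mulr0 subr0.
have -> : c + h = d by rewrite /h addrC subrK.
by move=> ->.
Qed.

Lemma size_scale_comp v (c h : R) N : (1 <= N)%N -> (size v <= N)%N ->
  (size (v \Po (c%:P + h *: 'X))%R <= N)%N.
Proof.
move=> N1 sv.
have sq : (size (c%:P + h *: 'X)%R <= 2)%N.
  apply: leq_trans (size_polyD _ _) _; rewrite geq_max.
  rewrite (leq_trans (size_polyC_leq1 _)) //=.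
  by rewrite (leq_trans (size_scale_leq _ _)) // size_polyX.
apply: leq_trans (size_comp_poly_leq _ _) _.
move: sq sv; move: (size (c%:P + h *: 'X)%R) (size v) => b a sq sv.
have h1 : (b.-1 <= 1)%N by lia.
have := leq_mul (leqnn a.-1) h1; rewrite muln1 => h2.
lia.
Qed.

End Aux.

Theorem proposition3p8 (R : realType) (k : nat) (xi w : nat -> R) (Cq : R) :
  (1 <= k)%N ->
  xi 0%N = 0 -> xi k.+1 = 1 ->
  (forall j : nat, (j <= k)%N -> xi j < xi j.+1) ->
  exists C : R, 0 < C /\
    forall (N : nat) (a b : R) (xs : nat -> R),
      (0 < N)%N -> xs 0%N = a -> xs N = b ->
      (forall i : nat, (i < N)%N -> xs i < xs i.+1) ->
      (forall i j : nat, (i < N)%N -> (j < N)%N -> hcell xs j <= Cq * hcell xs i) ->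
      (forall i : nat, (i < N)%N ->
         assumptionS k (xs i) (xs i.+1) (subpt xs xi i) (wt xs w i)) ->
      forall p : nat -> {poly R},
        (forall i : nat, (i < N)%N -> (size (p i) <= k.+1)%N) ->
        Num.sqrt (normsq_Mstar k N xs xi w p) <= C * Num.sqrt (normsq_omega N xs p).
Proof.
move=> k1 xi0 xi1 xinc.
pose Mj (j : 'I_k.+1) := Kc R k * \sum_(a < k.+1) `|mstar_val 'X^a xi w j|.
pose M := \sum_(j < k.+1) Mj j.
have Mj0 : forall j, 0 <= Mj j.
  by move=> j; rewrite mulr_ge0 ?Kc_ge0 // sumr_ge0 // => a _.
have M0 : 0 <= M by apply: sumr_ge0 => j _.
have MjM : forall j, Mj j <= M.
  by move=> j; rewrite /M (bigD1 j) //= lerDl sumr_ge0.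
have tel : \sum_(j < k.+1) (xi j.+1 - xi j) = 1.
  rewrite -(big_mkord xpredT (fun j => xi j.+1 - xi j)) telescope_sumr //.
  by rewrite xi1 xi0 subr0.
exists (M + 1); split; first by rewrite ltr_pwDr ?ltr01.
move=> N a b xs N0 xs0 xsN xsinc _ _ p sp.
have Rge0 : 0 <= normsq_omega N xs p.
  apply: sumr_ge0 => i _; apply: Rintegral_ge0 => t _; exact: sqr_ge0.
have key : normsq_Mstar k N xs xi w p <= M ^+ 2 * normsq_omega N xs p.
  rewrite /normsq_Mstar /normsq_omega mulr_sumr; apply: ler_sum => i _.
  have hpos : 0 < hcell xs i by rewrite subr_gt0 xsinc.
  have hi : xs i < xs i.+1 by exact: xsinc.
  rewrite integ_cell //.
  rewrite -/(hcell xs i).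
  set h := hcell xs i; set c := xs i.
  set u := p i \Po (c%:P + h *: 'X).
  have su : (size u <= k.+1)%N by apply: size_scale_comp => //; exact: sp.
  have B0 := Bf_ge0 R u.
  apply: (@le_trans _ _ (\sum_(j < k.+1) (M ^+ 2 * Bf R u u) * (h * (xi j.+1 - xi j)))).
    apply: ler_sum => j _.
    have xj : xi j < xi j.+1 by apply: xinc; rewrite -ltnS.
    have sj : subpt xs xi i j < subpt xs xi i j.+1.
      by rewrite /subpt -/c -/h ltrD2l ltr_pM2l.
    rewrite integ_const //.
    rewrite /subpt /wt -/c -/h.
    rewrite (mstar_scale R (p i) c h xi w j) -/u.
    have -> : c + h * xi j.+1 - (c + h * xi j) = h * (xi j.+1 - xi j) by ring.
    have dj : 0 <= h * (xi j.+1 - xi j) by apply: mulr_ge0; [exact: ltW | rewrite subr_ge0; exact: ltW].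
    rewrite ler_wpM2r //.
    have Hb : `|mstar_val u xi w j| <= M * Num.sqrt (Bf R u u).
      apply: le_trans (phi_bound R k (fun q => mstar_val q xi w j) u _ _ su) _.
      - by move=> q r; exact: mstar_valD.
      - by move=> cc q; exact: mstar_valZ.
      by rewrite ler_wpM2r ?sqrtr_ge0 // MjM.
    move/ler_normlP: Hb => [Hb1 Hb2].
    have S0 := sqrtr_ge0 (Bf R u u).
    have -> : M ^+ 2 * Bf R u u = (M * Num.sqrt (Bf R u u)) ^+ 2.
      by rewrite exprMn sqr_sqrtr.
    nra.
  rewrite -mulr_sumr.
  have -> : \sum_(j < k.+1) h * (xi j.+1 - xi j) = h by rewrite -mulr_sumr tel mulr1.
  by rewrite -mulrA [Bf R u u * h]mulrC.
apply: (@le_trans _ _ (Num.sqrt (M ^+ 2 * normsq_omega N xs p))).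
  by rewrite ler_sqrt // mulr_ge0 // sqr_ge0.
rewrite sqrtrM ?sqr_ge0 // sqrtr_sqr ger0_norm // ler_wpM2r ?sqrtr_ge0 //.
by rewrite lerDl ler01.
Qed.
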